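(* Let $d\ge1$. Every $(d+1)$-lateration graph can be obtained from a complete graph by a finite (possibly empty) sequence of edge-reduced graph attachments.
   Context: A graph $G=(V,E)$ with $V=\{1,\dots,v\}$ is a $(d+1)$-lateration graph if the vertices $1,\dots,d+1$ form a complete graph, and each vertex $i>d+1$ is joined to exactly $d+1$ vertices of $\{1,\dots,i-1\}$ (these being all the edges). Given graphs $G_A=(V_A,E_A)$, $G_B=(V_B,E_B)$ with $V_C=V_A\cap V_B$ nonempty and a proper subset of both $V_A$ and $V_B$, their graph attachment is $(V_A\cup V_B,E_A\cup E_B)$, and their edge-reduced graph attachment is obtained from it by removing the edges $\{i,j\}$ with $i,j\in V_C$ that belong to one of the two graphs ($G_B$, say) but not to the other ($G_A$). *)

(* Defs.v *)
From HB Require Import structures.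
From mathcomp Require Import all_boot finmap.
Set Implicit Arguments. Unset Strict Implicit. Unset Printing Implicit Defensive.
Local Open Scope fset_scope.

Record graph := Graph { verts : {fset nat}; edges : {fset {fset nat}} }.

Definition wf_graph (G : graph) : Prop :=
  forall e, e \in edges G -> #|` e| = 2 /\ e `<=` verts G.

Definition complete_graph (V : {fset nat}) : graph :=
  Graph V [fset [fset x; y] | x in V, y in V & x != y].

Definition segment (v : nat) : {fset nat} := [fset i | i in iota 1 v].

Definition lateration_graph (d : nat) (G : graph) : Prop :=
  exists v : nat,
    (d.+1 <= v)%N /\
        verts G = segment v /\
        wf_graph G /\
        (forall i j, (1 <= i <= d.+1)%N -> (1 <= j <= d.+1)%N -> i != j ->
           [fset i; j] \in edges G) /\
        (forall i, (d.+1 < i <= v)%N ->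
           #|` [fset j in segment i.-1 | [fset i; j] \in edges G] | = d.+1) /\
        (forall e, e \in edges G ->
           (e `<=` segment d.+1) \/
           exists i j, [/\ (d.+1 < i <= v)%N, (1 <= j < i)%N & e = [fset i; j]]).

Definition edge_reduced_attachment (GA GB G : graph) : Prop :=
  let VC := verts GA `&` verts GB in
  [/\ VC != fset0, VC `<` verts GA, VC `<` verts GB,
      verts G = verts GA `|` verts GB &
      edges G = (edges GA `|` edges GB) `\`
                [fset e in edges GB | (e `<=` VC) && (e \notin edges GA)]].

Inductive obtainable : graph -> Prop :=
  | obt_base (V : {fset nat}) : obtainable (complete_graph V)
  | obt_step (G : graph) (W : {fset nat}) (G' : graph) :
      obtainable G ->
      edge_reduced_attachment G (complete_graph W) G' ->
      obtainable G'.

(* Main.v *)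
Require Import Defs.
From HB Require Import structures.
From mathcomp Require Import all_boot finmap.
Local Open Scope fset_scope.
Lemma mem_seg v x : (x \in segment v) = (1 <= x <= v)%N.
Proof. by rewrite /segment inE mem_iota add1n ltnS. Qed.
Lemma card_seg v : #|` segment v| = v.
Proof. by rewrite /segment card_fseq undup_id ?size_iota // iota_uniq. Qed.
Lemma card2P (e : {fset nat}) : #|` e| = 2 -> exists x y, x != y /\ e = [fset x; y].
Proof. move=> h. have : e != fset0 by apply/eqP=> E; rewrite E cardfs0 in h.
case/fset0Pn=> x xe. have c1 : #|` e `\ x| == 1.
  by move: (cardfsD1 x e); rewrite xe h add1n => -[] <-.
case/cardfs1P: c1 => y ey.
exists x, y. have yin : y \in e `\ x by rewrite ey inE.
split. by move: yin; rewrite !inE eq_sym => /andP [].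
by rewrite -ey fsetD1K. Qed.

Lemma mem_cg V e : reflect (exists x y, [/\ x \in V, y \in V, x != y & e = [fset x; y]])
  (e \in edges (complete_graph V)).
Proof.
apply: (iffP (imfset2P _ _ _ _ _)) => /=.
  by move=> [x xV [y]]; rewrite !inE /= => /andP [yV xy] ->; exists x, y.
by move=> [x [y [xV yV xy ->]]]; exists x; rewrite ?inE //; exists y; rewrite ?inE ?xV ?yV.
Qed.

Lemma graph_eq G1 G2 : verts G1 = verts G2 -> edges G1 = edges G2 -> G1 = G2.
Proof. by case: G1; case: G2 => /= ? ? ? ? -> ->. Qed.

Definition restr (G : graph) k := Graph (segment k) [fset e in edges G | e `<=` segment k].

Lemma pair_sub (x y : nat) (S : {fset nat}) : x \in S -> y \in S -> [fset x; y] `<=` S.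
Proof. by move=> xS yS; apply/fsubsetP => z; rewrite !inE => /orP [] /eqP ->. Qed.

Lemma adj_small d (G : graph) v :
  (forall i j, (1 <= i <= d.+1)%N -> (1 <= j <= d.+1)%N -> i != j ->
           [fset i; j] \in edges G) ->
  (forall i, (d.+1 < i <= v)%N ->
           #|` [fset j in segment i.-1 | [fset i; j] \in edges G] | = d.+1) ->
  forall k x y, (k <= d.+2)%N -> (k <= v)%N -> x \in segment k -> y \in segment k -> x != y ->
  [fset x; y] \in edges G.
Proof.
move=> H4 H5 k x0 y0 kd kv.
have key : forall x y, (x < y)%N -> x \in segment k -> y \in segment k -> [fset x; y] \in edges G.
  move=> x y xy; rewrite !mem_seg => /andP [x1 xk] /andP [y1 yk].
  have [yd|yd] := leqP y d.+1.
    apply: H4; rewrite ?x1 ?y1 ?yd ?(ltn_eqF xy) //; apply: leq_trans yd; exact: ltnW.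
  have ey : y = d.+2 by apply/eqP; rewrite eqn_leq yd (leq_trans yk kd).
  subst y.
  have := H5 d.+2; rewrite /= ltnSn (leq_trans yk kv) => /(_ isT) hc.
  set N := [fset j in segment d.+1 | _] in hc.
  have NS : N `<=` segment d.+1 by apply/fsubsetP => z; rewrite !inE => /andP [].
  have : N == segment d.+1 by rewrite eqEfcard NS card_seg hc leqnn.
  move/eqP => eN.
  have : x \in N by rewrite eN mem_seg x1.
  by rewrite !inE => /andP [_]; rewrite fsetUC.
move=> xk yk; rewrite neq_ltn => /orP [] h; first exact: key.
by rewrite fsetUC; apply: key.
Qed.

Lemma card2_pair (G : graph) e : wf_graph G -> e \in edges G ->
  exists x y, x != y /\ e = [fset x; y].
Proof. by move=> wf /wf [/card2P]. Qed.

Lemma base d (G : graph) v :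
  wf_graph G ->
  (forall i j, (1 <= i <= d.+1)%N -> (1 <= j <= d.+1)%N -> i != j ->
           [fset i; j] \in edges G) ->
  (forall i, (d.+1 < i <= v)%N ->
           #|` [fset j in segment i.-1 | [fset i; j] \in edges G] | = d.+1) ->
  forall k, (k <= d.+2)%N -> (k <= v)%N -> restr G k = complete_graph (segment k).
Proof.
move=> wf H4 H5 k kd kv; apply: graph_eq => //=.
apply/fsetP => e; rewrite inE; apply/andP/mem_cg.
  move=> [eE esub]; have [x [y [xy ee]]] := @card2_pair G e wf eE.
  exists x, y; split => //; apply: (fsubsetP esub); rewrite ee !inE eqxx ?orbT //.
move=> [x [y [xk yk xy ->]]]; split; last exact: pair_sub.
exact: (@adj_small d G v H4 H5 k x y kd kv).
Qed.

Lemma mem_sep (A : {fset {fset nat}}) (P : pred {fset nat}) e :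
  (e \in [fset x in A | P x]) = (e \in A) && P e.
Proof. by rewrite inE. Qed.
Lemma mem_sepn (A : {fset nat}) (P : pred nat) e :
  (e \in [fset x in A | P x]) = (e \in A) && P e.
Proof. by rewrite inE. Qed.
Lemma mem_restr G k e : (e \in edges (restr G k)) = (e \in edges G) && (e `<=` segment k).
Proof. by rewrite /= inE. Qed.
Lemma seg_sub k : segment k `<=` segment k.+1.
Proof. by apply/fsubsetP => x; rewrite !mem_seg => /andP [-> /leqW]. Qed.
Lemma seg_pred k x : x \in segment k.+1 -> x != k.+1 -> x \in segment k.
Proof. by rewrite !mem_seg [x <= _]leq_eqVlt ltnS => /andP [-> /orP [->|]]. Qed.

Lemma step d (G : graph) v :
  wf_graph G ->
  (forall i, (d.+1 < i <= v)%N ->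
           #|` [fset j in segment i.-1 | [fset i; j] \in edges G] | = d.+1) ->
  forall k, (d.+2 <= k)%N -> (k < v)%N ->
  edge_reduced_attachment (restr G k)
    (complete_graph (k.+1 |` [fset j in segment k | [fset k.+1; j] \in edges G]))
    (restr G k.+1).
Proof.
move=> wf H5 k dk kv.
set N := [fset j in segment k | _].
have cN : #|` N| = d.+1 by apply: (H5 k.+1); rewrite ltnS (ltnW dk) kv.
have NS : N `<=` segment k by apply/fsubsetP => z; rewrite !inE => /andP [].
have nk : k.+1 \notin segment k by rewrite mem_seg ltnn andbF.
have nN : k.+1 \notin N by apply: contra nk; apply: (fsubsetP NS).
have VC : segment k `&` (k.+1 |` N) = N.
  apply/fsetP => x; rewrite in_fsetI in_fset1U; have [->|ne] := eqVneq x k.+1.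
    by rewrite (negbTE nk) (negbTE nN).
  by rewrite /=; case xN: (x \in N); rewrite ?andbF // (fsubsetP NS).
rewrite /edge_reduced_attachment /= VC; split.
- by apply/eqP => e; rewrite e cardfs0 in cN.
- by rewrite fproperEcard NS card_seg cN.
- rewrite fproperE fsubsetU1 /=; apply/negP => /fsubsetP /(_ k.+1); rewrite in_fset1U eqxx => /(_ isT).
  exact/negP.
- apply/fsetP => x; rewrite in_fsetU in_fset1U !mem_seg; have [->|ne] := eqVneq x k.+1.
    by rewrite ltnSn /= orbT.
  rewrite [x <= k.+1]leq_eqVlt (negbTE ne) /= ltnS.
  case xN: (x \in N); rewrite ?orbF // orbT.
  by move: (fsubsetP NS x xN); rewrite mem_seg.
- change (edges (restr G k.+1) = (edges (restr G k) `|` edges (complete_graph (k.+1 |` N))) `\`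
     [fset e in edges (complete_graph (k.+1 |` N)) | (e `<=` N) && (e \notin edges (restr G k))]).
  apply/fsetP => e; rewrite in_fsetD in_fsetU mem_sep !mem_restr.
  apply/idP/idP.
    move=> /andP [eE esub].
    have [sk|nsk] := boolP (e `<=` segment k).
      by rewrite eE /= !andbF.
    have [j [jN ej]] : exists j, j \in N /\ e = [fset k.+1; j].
      have [x [y [xy ee]]] := @card2_pair G e wf eE.
      have xs : x \in segment k.+1 by apply: (fsubsetP esub); rewrite ee in_fset2 eqxx.
      have ys : y \in segment k.+1 by apply: (fsubsetP esub); rewrite ee in_fset2 eqxx orbT.
      have [xk|xk] := eqVneq x k.+1.
        subst x; exists y; split => //.
        by rewrite /N mem_sepn (@seg_pred _ _ ys) // 1?eq_sym // -ee eE.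
      have [yk|yk] := eqVneq y k.+1.
        subst y; exists x; split; last by rewrite fsetUC.
        by rewrite /N mem_sepn (@seg_pred _ _ xs) // fsetUC -ee eE.
      by move: nsk; rewrite ee pair_sub // seg_pred.
    have eC : e \in edges (complete_graph (k.+1 |` N)).
      apply/mem_cg; exists k.+1, j; split => //; rewrite ?in_fset1U ?eqxx ?jN ?orbT //.
      by apply: contra nN => /eqP ->.
    have eN : (e `<=` N) = false.
      by apply/negP => /fsubsetP /(_ k.+1); rewrite ej in_fset2 eqxx => /(_ isT); apply/negP.
    by rewrite eC eN /= orbT.
  move=> /andP [nrem /orP [/andP [eE sk] | eC]].
    by rewrite eE (fsubset_trans sk (seg_sub k)).
  have [eN|eN] := boolP (e `<=` N).
    move: nrem; rewrite eC eN /= negbK => /andP [eE sk].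
    by rewrite eE (fsubset_trans sk (seg_sub k)).
  case/mem_cg: eC => x [y [xW yW xy ee]].
  have xyN : (x \in N) = false \/ (y \in N) = false.
    case xN: (x \in N); case yN: (y \in N); try by [left|right].
    by move: eN; rewrite ee pair_sub.
  have main : forall a b, a \in k.+1 |` N -> b \in k.+1 |` N -> a != b -> (a \in N) = false ->
     ([fset a; b] \in edges G) && ([fset a; b] `<=` segment k.+1).
    move=> a b; rewrite !in_fset1U => /orP [/eqP ->|->] //.
    move=> /orP [/eqP ->|bN]; first by rewrite eqxx.
    move=> _ _; move: (bN); rewrite /N mem_sepn => /andP [bs ->] /=.
    apply: pair_sub; first by rewrite mem_seg ltnSn.
    by move: (fsubsetP NS b bN); apply: fsubsetP; apply: seg_sub.
  case: xyN => h; rewrite ee; first exact: main.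
  by rewrite fsetUC; apply: main => //; rewrite eq_sym.
Qed.

Theorem proposition3 (d : nat) : (1 <= d)%N ->
  forall G : graph, lateration_graph d G -> obtainable G.
Proof.
move=> _ G [v [dv [Vv [wf [H4 [H5 H6]]]]]].
have P : forall n, (d.+1 + n <= v)%N -> obtainable (restr G (d.+1 + n)).
  elim=> [|n IH] hv.
    rewrite addn0 in hv *; rewrite (@base d G v wf H4 H5) //; first exact: obt_base.
  case: n IH hv => [|n] IH hv.
    rewrite addn1 in hv *; rewrite (@base d G v wf H4 H5) //; exact: obt_base.
  have hv' : (d.+1 + n.+1 <= v)%N by rewrite addnS in hv; exact: ltnW.
  rewrite addnS.
  apply: (obt_step (IH hv')).
  apply: (@step d G v wf H5); first by rewrite addnS ltnS leq_addr.
  by rewrite -addnS.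
have -> : G = restr G (d.+1 + (v - d.+1)).
  rewrite subnKC //; apply: graph_eq => //=.
  apply/fsetP => e; rewrite inE; apply/idP/andP => [eE|[] //].
  by split => //; rewrite -Vv; case: (wf e eE).
by apply: P; rewrite subnKC.
Qed.
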